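(* Let $\boldsymbol{\mathcal{G}}=(\mathcal{V},\boldsymbol{\mathcal{E}},\mu(\cdot))$ be a stochastic digraph with vertex set $\mathbb{Z}_n=\{1,\dots,n\}$, edge sets $\mathcal{E}_1,\dots,\mathcal{E}_h$, and out-neighborhood map $H(x,w)=\{y\in\mathbb{Z}_n:(x,y)\in\mathcal{E}_w\}$, and assume that there is no pair $(i,w)\in\mathbb{Z}_n\times\mathbb{Z}_h$ with $\mu(\{w\})>0$ and $H(i,w)=\emptyset$. Let $\boldsymbol{x}$ be a stochastic directed path of $\boldsymbol{\mathcal{G}}$, i.e., $\boldsymbol{x}\in\mathcal{S}(x)$ for some $x\in\mathbb{Z}_n$. For $i,j\in\mathbb{Z}_n$ define $$\ell_{i,j}:=\sum_{s\in\{w\in\mathbb{Z}_h:\,H(i,w)=\{j\}\}}\mu(\{s\})\in[0,1],\qquad m_{i,j}:=\sum_{s\in\{w\in\mathbb{Z}_h:\,H(i,w)\cap\{j\}\neq\emptyset\}}\mu(\{s\})\in[0,1].$$ Then, for each $i,j\in\mathbb{Z}_n$ (and each time $k$), $$\ell_{i,j}\leqslant \mathbb{P}(\boldsymbol{x}_{k+1}=j\mid \boldsymbol{x}_k=i)\leqslant m_{i,j},$$ i.e., $\ell_{i,j}$ and $m_{i,j}$ are a lower and an upper bound, respectively, on the transition probability from node $i$ to node $j$.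
   Context: A stochastic digraph is a triple $\boldsymbol{\mathcal{G}}=(\mathcal{V},\boldsymbol{\mathcal{E}},\mu(\cdot))$ where $\mathcal{V}=\mathbb{Z}_n$, $\boldsymbol{\mathcal{E}}=\{\mathcal{E}_s\}_{s=1}^h$ ($h<\infty$) with each $\mathcal{E}_s\subset\mathbb{Z}_n\times\mathbb{Z}_n$, and $\mu$ is the common distribution of an i.i.d. sequence of random variables $\boldsymbol{w}_k:\Omega\to\mathbb{Z}_h=\{1,\dots,h\}$, $k\in\mathbb{Z}_{\geqslant0}$, on a probability space $(\Omega,\mathcal{F},\mathbb{P})$: $\mu(F)=\mathbb{P}(\boldsymbol{w}_k\in F)$ for $F\subset\mathbb{Z}_h$. A sequence $\{(\phi_k,w_k)\}_{k=0}^K$ is a regular directed path starting at $x$ if $\phi_0=x$ and $\phi_{k+1}\in H(\phi_k,w_k)$ for $k=0,\dots,K-1$. A stochastic directed path from $x$ is a map $\omega\mapsto\{\boldsymbol{x}_k(\omega)\}_{k=0}^{\boldsymbol{K}(\omega)}$, with $\boldsymbol{K}:\Omega\to\mathbb{Z}_{\geqslant0}\cup\{\infty\}$ a random variable, such that (path-wise feasibility) for each $\omega$, $\{(\boldsymbol{x}_k(\omega),\boldsymbol{w}_k(\omega))\}_{k=0}^{\boldsymbol{K}(\omega)}$ is a regular directed path from $x$, and (causal measurability) for each $k$, $\omega\mapsto\boldsymbol{x}_{k+1}(\omega)$ is $\mathcal{F}_k$-measurable, where $(\mathcal{F}_k)_k$ is the minimal filtration generated by $\boldsymbol{w}$ (i.e.,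 $\mathcal{F}_k=\sigma(\boldsymbol{w}_0,\dots,\boldsymbol{w}_k)$). A stochastic directed path is maximal if it cannot be extended; $\mathcal{S}(x)$ denotes the set of maximal stochastic directed paths from $x$. *)

(* Defs.v *)
From HB Require Import structures.
From mathcomp Require Import all_boot all_order all_algebra.
From mathcomp Require Import all_classical all_reals all_analysis.
Set Implicit Arguments. Unset Strict Implicit. Unset Printing Implicit Defensive.
Import Order.TTheory GRing.Theory Num.Theory.
Local Open Scope classical_set_scope.
Local Open Scope ring_scope.

(* Out-neighborhood map H(x,w) = {y | (x,y) \in E_w}.  Vertices 'I_n, labels 'I_h
   (0-indexed versions of Z_n, Z_h). *)
Definition Hnb (n h : nat) (E : 'I_h -> {set 'I_n * 'I_n}) (x : 'I_n) (s : 'I_h)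
  : {set 'I_n} := [set y | (x, y) \in E s].

Definition gen_sets (T : Type) (h : nat) (w : nat -> T -> 'I_h) (k : nat)
  : set (set T) :=
  [set A | exists i, (i <= k)%N /\ exists B : set 'I_h, A = w i @^-1` B].

Definition filtr (T : Type) (h : nat) (w : nat -> T -> 'I_h) (k : nat)
  : set (set T) := <<s gen_sets w k >>.

Definition mutually_independent (R : realType) (d : measure_display)
  (T : measurableType d) (P : probability T R) (h : nat) (w : nat -> T -> 'I_h) :=
  forall (s : seq nat) (B : nat -> set 'I_h), uniq s ->
    P (\big[setI/setT]_(i <- s) (w i @^-1` B i)) =
    (\prod_(i <- s) P (w i @^-1` B i))%E.

(* A stochastic directed path from x0, encoded as x : nat -> T -> option 'I_n,
   where x k om = Some (x_k(om)) if k <= K(om) and None otherwise.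
   - x_0 = x0;  - the set of defined times is an initial segment {0..K(om)};
   - path-wise feasibility: x_{k+1} \in H(x_k, w_k);
   - causal measurability: om |-> x_{k+1}(om) (including whether it is defined,
     i.e. the event {K >= k+1}) is F_k-measurable. *)
Definition stoch_path (T : Type) (n h : nat) (E : 'I_h -> {set 'I_n * 'I_n})
  (w : nat -> T -> 'I_h) (x0 : 'I_n) (x : nat -> T -> option 'I_n) : Prop :=
  [/\ (forall om, x 0%N om = Some x0),
      (forall k om, x k.+1 om <> None -> x k om <> None),
      (forall k om a b, x k om = Some a -> x k.+1 om = Some b ->
         b \in Hnb E a (w k om))
    & (forall k (v : option 'I_n), filtr w k [set om | x k.+1 om = v])].

Definition maximal_stoch_path (T : Type) (n h : nat) (E : 'I_h -> {set 'I_n * 'I_n})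
  (w : nat -> T -> 'I_h) (x0 : 'I_n) (x : nat -> T -> option 'I_n) : Prop :=
  stoch_path E w x0 x /\
  forall y, stoch_path E w x0 y ->
    (forall k om, x k om <> None -> y k om = x k om) -> y = x.

Definition Spaths (T : Type) (n h : nat) (E : 'I_h -> {set 'I_n * 'I_n})
  (w : nat -> T -> 'I_h) (x0 : 'I_n) : set (nat -> T -> option 'I_n) :=
  [set x | maximal_stoch_path E w x0 x].

Definition ell (R : realType) (n h : nat) (E : 'I_h -> {set 'I_n * 'I_n})
  (mu : 'I_h -> R) (i j : 'I_n) : R :=
  \sum_(s : 'I_h | Hnb E i s == [set j]%SET) mu s.

Definition emm (R : realType) (n h : nat) (E : 'I_h -> {set 'I_n * 'I_n})
  (mu : 'I_h -> R) (i j : 'I_n) : R :=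
  \sum_(s : 'I_h | j \in Hnb E i s) mu s.

Definition cond_prob (R : realType) (d : measure_display) (T : measurableType d)
  (P : probability T R) (A B : set T) : R :=
  fine (P (A `&` B)) / fine (P B).

(* Main.v *)
Require Import Defs.
From HB Require Import structures.
From mathcomp Require Import all_boot all_order all_algebra.
From mathcomp Require Import all_classical all_reals all_analysis.
Import Order.TTheory GRing.Theory Num.Theory.
Local Open Scope classical_set_scope.
Local Open Scope ring_scope.

Definition Wv (T : Type) (h : nat) (w : nat -> T -> 'I_h) (k : nat) (om : T)
  : {ffun 'I_k -> 'I_h} := [ffun i : 'I_k => w i om].
Arguments Wv {T h}.

Lemma filtr_preim (T : Type) (h : nat) (w : nat -> T -> 'I_h) (k : nat) (A : set T) :
  filtr w k A -> exists C : set {ffun 'I_k.+1 -> 'I_h}, A = Wv w k.+1 @^-1` C.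
Proof.
move=> hA.
have : preimage_set_system setT (Wv w k.+1) setT A.
  apply: (smallest_sub _ _ hA).
  - apply: sigma_algebra_preimage; split => //.
  - move=> B [i [hi [B' ->]]].
    exists [set f | B' (f (Ordinal (hi : (i < k.+1)%N)))] => //.
    rewrite setTI; apply/seteqP; split=> om /=; by rewrite /Wv ffunE.
by case=> C _ <-; exists C; rewrite setTI.
Qed.

Lemma filtr_meas (d : measure_display) (T : measurableType d) (h : nat)
  (w : nat -> T -> 'I_h)
  (w_meas : forall k (B : set 'I_h), measurable (w k @^-1` B)) k (A : set T) :
  filtr w k A -> measurable A.
Proof.
move=> hA; apply: (smallest_sub _ _ hA).
- exact: sigma_algebra_measurable.
- by move=> B [i [hi [B' ->]]].
Qed.

Lemma filtr_mono (T : Type) (h : nat) (w : nat -> T -> 'I_h) (k : nat) (A : set T) :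
  filtr w k A -> filtr w k.+1 A.
Proof.
move=> hA; apply: (smallest_sub _ _ hA).
- exact: smallest_sigma_algebra.
- move=> B; rewrite /gen_sets /= => -[i [hi hB]].
  apply: (@sub_smallest _ _ (gen_sets w k.+1) (gen_sets w k.+1)) => //.
  by exists i; split => //; apply: leqW.
Qed.

Lemma bigI_mem (T : Type) (I : eqType) (r : seq I) (F : I -> set T) (om : T) :
  (\big[setI/setT]_(i <- r) F i) om <-> (forall i, i \in r -> F i om).
Proof.
elim: r => [|a r IH]; first by rewrite big_nil; split.
rewrite big_cons; split.
- case=> Ha /IH Hr i; rewrite inE => /orP[/eqP->|/Hr] //.
- move=> H; split; first by apply: H; rewrite inE eqxx.
  by apply/IH => i hi; apply: H; rewrite inE hi orbT.
Qed.

Lemma bigU_mem (T : Type) (I : eqType) (r : seq I) (p : pred I) (F : I -> set T) (om : T) :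
  (\big[setU/set0]_(i <- r | p i) F i) om <-> (exists i, [/\ i \in r, p i & F i om]).
Proof.
elim: r => [|a r IH]; first by rewrite big_nil; split => // -[i []].
rewrite big_cons; case: ifP => pa; split.
- case=> [Fa|/IH [i [ir pi Fi]]]; first by exists a; rewrite inE eqxx.
  by exists i; rewrite inE ir orbT.
- move=> [i [+ pi Fi]]; rewrite inE => /orP[/eqP ia|ir]; first by left; rewrite -ia.
  by right; apply/IH; exists i.
- by move=> /IH [i [ir pi Fi]]; exists i; rewrite inE ir orbT.
- move=> [i [+ pi Fi]]; rewrite inE => /orP[/eqP ia|ir]; first by rewrite ia pa in pi.
  by apply/IH; exists i.
Qed.
Local Open Scope ring_scope.

Definition gB (h k : nat) (f : {ffun 'I_k -> 'I_h}) (B : set 'I_h) (i : nat) : set 'I_h :=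
  if i == k then B else [set s | forall j : 'I_k, nat_of_ord j = i -> s = f j].
Arguments gB {h k}.

Lemma single_eq (T : Type) (h : nat) (w : nat -> T -> 'I_h) k (f : {ffun 'I_k -> 'I_h})
  (B : set 'I_h) :
  Wv w k @^-1` [set f] `&` w k @^-1` B =
  \big[setI/setT]_(i <- index_iota 0 k.+1) (w i @^-1` gB f B i).
Proof.
apply/seteqP; split => om.
- move=> [/= Wf Bk]; apply/bigI_mem => i; rewrite mem_index_iota /= => hi.
  rewrite /gB; case: eqP => [->|ik] //= j ji.
  by rewrite -Wf /Wv ffunE ji.
- move/bigI_mem => H; split.
  + apply/ffunP => j; rewrite /Wv ffunE.
    have := H j; rewrite mem_index_iota /= ltnS (ltnW (ltn_ord j)) /gB.
    rewrite (ltn_eqF (ltn_ord j)) /= => /(_ isT); by apply.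
  + have := H k; rewrite mem_index_iota /= ltnSn /gB eqxx; by apply.
Qed.

Lemma single_meas (d : measure_display) (T : measurableType d) (h : nat)
  (w : nat -> T -> 'I_h)
  (w_meas : forall k (B : set 'I_h), measurable (w k @^-1` B)) k f B :
  measurable (Wv w k @^-1` [set f] `&` w k @^-1` B).
Proof.
by rewrite single_eq; apply: bigsetI_measurable => i _; apply: w_meas.
Qed.

Lemma indep_single (R : realType) (d : measure_display) (T : measurableType d)
  (P : probability T R) (h : nat) (w : nat -> T -> 'I_h)
  (w_indep : mutually_independent P w) k (f : {ffun 'I_k -> 'I_h}) (B : set 'I_h) :
  P (Wv w k @^-1` [set f] `&` w k @^-1` B) =
  (P (Wv w k @^-1` [set f]) * P (w k @^-1` B))%E.
Proof.
have key : forall B', P (Wv w k @^-1` [set f] `&` w k @^-1` B') =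
   ((\prod_(0 <= i < k) P (w i @^-1` gB f setT i)) * P (w k @^-1` B'))%E.
  move=> B'; rewrite single_eq w_indep; last exact: iota_uniq.
  rewrite big_nat_recr //= {2}/gB eqxx; congr (_ * _)%E.
  apply: eq_big_nat => i /andP[_ hi]; by rewrite /gB (ltn_eqF hi).
rewrite key; congr (_ * _)%E.
have := key setT; rewrite preimage_setT setIT probability_setT mule1 => ->.
by [].
Qed.

Lemma indep_gen (R : realType) (d : measure_display) (T : measurableType d)
  (P : probability T R) (h : nat) (w : nat -> T -> 'I_h)
  (w_meas : forall k (B : set 'I_h), measurable (w k @^-1` B))
  (w_indep : mutually_independent P w) k (C : set {ffun 'I_k -> 'I_h}) (B : set 'I_h) :
  P (Wv w k @^-1` C `&` w k @^-1` B) =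
  (P (Wv w k @^-1` C) * P (w k @^-1` B))%E.
Proof.
have decomp : forall B', P (Wv w k @^-1` C `&` w k @^-1` B') =
    (\sum_(f \in C) (P (Wv w k @^-1` [set f]) * P (w k @^-1` B')))%E.
  move=> B'.
  have -> : Wv w k @^-1` C `&` w k @^-1` B' =
            \bigcup_(f in C) (Wv w k @^-1` [set f] `&` w k @^-1` B').
    apply/seteqP; split => om.
    - by move=> [/= Cf Bk]; exists (Wv w k om) => //.
    - by move=> [f Cf [Wf Bk]]; split => //; rewrite /preimage /= Wf.
  rewrite measure_fin_bigcup //.
  - by apply: eq_fsbigr => f _; exact: (@indep_single _ _ _ _ _ _ w_indep).
  - exact: finite_finset.
  - by move=> f g _ _ [om [[/= Wf _] [/= Wg _]]]; rewrite -Wf -Wg.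
  - by move=> f _; apply: single_meas.
rewrite decomp.
have -> : Wv w k @^-1` C = Wv w k @^-1` C `&` w k @^-1` setT.
  by rewrite preimage_setT setIT.
rewrite decomp preimage_setT probability_setT !fsbig_finite; try exact: finite_finset.
by rewrite -!ge0_sume_distrl ?mule1 // => f _; exact: measure_ge0.
Qed.
Lemma filtrI (T : pointedType) h (w : nat -> T -> 'I_h) k (A B : set T) :
  filtr w k A -> filtr w k B -> filtr w k (A `&` B).
Proof. move=> hA hB. exact: (@measurableI _ (g_sigma_algebraType (gen_sets w k)) A B). Qed.
Lemma filtrU (T : pointedType) h (w : nat -> T -> 'I_h) k (A B : set T) :
  filtr w k A -> filtr w k B -> filtr w k (A `|` B).
Proof. move=> hA hB. exact: (@measurableU _ (g_sigma_algebraType (gen_sets w k)) A B). Qed.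
Lemma filtrC (T : pointedType) h (w : nat -> T -> 'I_h) k (A : set T) :
  filtr w k A -> filtr w k (~` A).
Proof. move=> hA. exact: (@measurableC _ (g_sigma_algebraType (gen_sets w k)) A). Qed.
Lemma filtrT (T : pointedType) h (w : nat -> T -> 'I_h) k :
  filtr w k setT.
Proof. exact: (@measurableT _ (g_sigma_algebraType (gen_sets w k))). Qed.
Lemma filtr0 (T : pointedType) h (w : nat -> T -> 'I_h) k :
  filtr w k set0.
Proof. exact: (@measurable0 _ (g_sigma_algebraType (gen_sets w k))). Qed.

Lemma filtr_gen (T : Type) h (w : nat -> T -> 'I_h) k (B : set 'I_h) :
  filtr w k (w k @^-1` B).
Proof.
apply: (@sub_smallest _ _ (gen_sets w k) (gen_sets w k)) => //.
by exists k; split => //; exists B.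
Qed.

Lemma event_filtr (T : pointedType) (n h : nat) (E : 'I_h -> {set 'I_n * 'I_n})
  (w : nat -> T -> 'I_h) (x0 : 'I_n) (x : nat -> T -> option 'I_n) :
  stoch_path E w x0 x -> forall k v, filtr w k [set om | x k om = v].
Proof.
case=> h0 h1 h2 h3 [|k] v; last exact: filtr_mono.
have [->|nv] := eqVneq v (Some x0).
  have -> : [set om | x 0%N om = Some x0] = setT.
    by apply/seteqP; split => om //= _; rewrite h0.
  exact: filtrT.
have -> : [set om | x 0%N om = v] = set0.
  apply/seteqP; split => om //=; rewrite h0 => e.
  by rewrite e eqxx in nv.
exact: filtr0.
Qed.

Lemma event_preim (T : pointedType) (n h : nat) (E : 'I_h -> {set 'I_n * 'I_n})
  (w : nat -> T -> 'I_h) (x0 : 'I_n) (x : nat -> T -> option 'I_n) :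
  stoch_path E w x0 x -> forall k v, exists C : set {ffun 'I_k -> 'I_h},
    [set om | x k om = v] = Wv w k @^-1` C.
Proof.
move=> sp [|k] v; last by apply: filtr_preim; case: sp => _ _ _; apply.
case: sp => h0 _ _ _.
exists [set _ | Some x0 = v]; apply/seteqP; split => om /=; by rewrite h0.
Qed.

Lemma event_meas (d : measure_display) (T : measurableType d) (n h : nat)
  (E : 'I_h -> {set 'I_n * 'I_n}) (w : nat -> T -> 'I_h)
  (w_meas : forall k (B : set 'I_h), measurable (w k @^-1` B))
  (x0 : 'I_n) (x : nat -> T -> option 'I_n) :
  stoch_path E w x0 x -> forall k v, measurable [set om | x k om = v].
Proof.
move=> sp k v; apply: (@filtr_meas _ _ _ w w_meas k).
exact: (@event_filtr T n h E w x0 x sp k v).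
Qed.

Lemma dist_sum (R : realType) (d : measure_display) (T : measurableType d)
  (P : probability T R) (h : nat) (mu : 'I_h -> R) (w : nat -> T -> 'I_h)
  (w_meas : forall k (B : set 'I_h), measurable (w k @^-1` B))
  (w_dist : forall k (s : 'I_h), P (w k @^-1` [set s]) = (mu s)%:E)
  k (p : pred 'I_h) :
  P (w k @^-1` [set s | p s]) = (\sum_(s : 'I_h | p s) mu s)%:E.
Proof.
have -> : w k @^-1` [set s | p s] = \big[setU/set0]_(s < h | p s) (w k @^-1` [set s]).
  apply/seteqP; split => om.
  - by move=> /= ps; apply/bigU_mem; exists (w k om); rewrite mem_index_enum.
  - by move=> /bigU_mem [s [_ ps /= ->]].
rewrite measure_bigsetU_ord //.
- by rewrite -sumEFin; apply: eq_bigr => s _; exact: w_dist.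
- by move=> f g _ _ [om [/= <- <-]].
Qed.

Lemma forced_step (T : pointedType) (n h : nat) (E : 'I_h -> {set 'I_n * 'I_n})
  (w : nat -> T -> 'I_h) (x0 : 'I_n) (x : nat -> T -> option 'I_n) :
  maximal_stoch_path E w x0 x -> forall k i j om,
  x k om = Some i -> Hnb E i (w k om) = [set j]%SET -> x k.+1 om = Some j.
Proof.
case=> sp hmax k i j om xi Hj.
case: (sp) => h0 h1 h2 h3.
case e: (x k.+1 om) => [b|].
  by have := h2 _ _ _ _ xi e; rewrite Hj inE => /eqP ->.
exfalso.
pose S := [set om' | [/\ x k om' = Some i, Hnb E i (w k om') = [set j]%SET
                      & x k.+1 om' = None]].
pose y := fun m om' => if (m == k.+1) && `[< S om' >] then Some j else x m om'.
have kk : (k == k.+1) = false by rewrite ltn_eqF.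
have SF : filtr w k S.
  have -> : S = [set om' | x k om' = Some i] `&`
       (w k @^-1` [set s | Hnb E i s = [set j]%SET]) `&` [set om' | x k.+1 om' = None].
    by apply/seteqP; split => om' /=; [case=> a b c | case=> [[a b] c]].
  apply: filtrI; last exact: h3.
  apply: filtrI; last exact: filtr_gen.
  exact: (@event_filtr _ _ _ _ _ _ _ sp).
have spy : stoch_path E w x0 y.
  split.
  - by move=> om'; rewrite /y /= h0.
  - move=> m om'; rewrite /y.
    case: (boolP ((m.+1 == k.+1) && `[< S om' >])) => [/andP[/eqP [mk] /asboolP [xi' _ _]]|nb].
      by subst m; rewrite kk /= xi'.
    move=> hne; case: ifP => // _; exact: h1 hne.
  - move=> m om' a c; rewrite /y.
    case: (boolP ((m.+1 == k.+1) && `[< S om' >])) => [/andP[/eqP [mk] /asboolP [xi' Hj' _]]|nb1].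
      subst m; rewrite kk /= xi' => -[<-] -[<-].
      by rewrite Hj' inE.
    case: (boolP ((m == k.+1) && `[< S om' >])) => [/andP[/eqP mk /asboolP [_ _ xN]]|nb2].
      subst m => _ /= e2; exfalso.
      by have := h1 k.+1 om'; rewrite e2 xN; apply.
    move=> /= e1 e2; exact: h2 e1 e2.
  - move=> m v.
    have [->|mk] := eqVneq m k.
      have -> : [set om' | y k.+1 om' = v] =
          (S `&` [set _ | v = Some j]) `|` (~` S `&` [set om' | x k.+1 om' = v]).
        apply/seteqP; split => om'; rewrite /y eqxx /=.
        + case: (boolP `[< S om' >]) => [/asboolP Som|/asboolP nS] /= ev.
            by left; split.
          by right; split.
        + case=> [[Som ev]|[nS ev]]; first by rewrite asboolT.
          by rewrite asboolF.
      apply: filtrU; apply: filtrI => //; [|exact: filtrC].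
      have [->|nv] := eqVneq v (Some j).
        have -> : [set _ : T | Some j = Some j] = setT by apply/seteqP; split.
        exact: filtrT.
      have -> : [set _ : T | v = Some j] = set0.
        by apply/seteqP; split => // om' /= ev; rewrite ev eqxx in nv.
      exact: filtr0.
    have -> : [set om' | y m.+1 om' = v] = [set om' | x m.+1 om' = v].
      by apply/seteqP; split => om'; rewrite /y eqSS (negbTE mk).
    exact: h3.
have yx : y = x.
  apply: hmax => // m om' hne; rewrite /y; case: ifP => // /andP[/eqP mk /asboolP [_ _ xN]].
  by subst m; rewrite xN in hne.
by have := congr1 (fun f => f k.+1 om) yx; rewrite /y eqxx asboolT //= e.
Qed.

Theorem theorem1 (R : realType) (d : measure_display) (T : measurableType d)
  (P : probability T R) (n h : nat) (E : 'I_h -> {set 'I_n * 'I_n})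
  (mu : 'I_h -> R) (w : nat -> T -> 'I_h)
  (w_meas : forall k (B : set 'I_h), measurable (w k @^-1` B))
  (w_dist : forall k (s : 'I_h), P (w k @^-1` [set s]) = (mu s)%:E)
  (w_indep : mutually_independent P w)
  (no_dead : ~ (exists (i : 'I_n) (s : 'I_h), 0 < mu s /\ Hnb E i s = finset.set0))
  (x0 : 'I_n) (x : nat -> T -> option 'I_n) (hx : x \in Spaths E w x0)
  (i j : 'I_n) (k : nat)
  (hpos : (0 < P [set om | x k om = Some i])%E) :
  ell E mu i j
    <= cond_prob P [set om | x k.+1 om = Some j] [set om | x k om = Some i]
    <= emm E mu i j.
Proof.
have hm := set_mem hx.
have sp := hm.1.
have [C AC] := @event_preim T n h E w x0 x sp k (Some i).
have indep : forall p : pred 'I_h,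
    P ([set om | x k om = Some i] `&` w k @^-1` [set s | p s]) =
    (P [set om | x k om = Some i] * (\sum_(s | p s) mu s)%:E)%E.
  move=> p; rewrite AC (@indep_gen _ _ _ _ _ _ w_meas w_indep) -AC.
  by rewrite (@dist_sum _ _ _ _ _ mu _ w_meas w_dist).
have mA := @event_meas _ T n h E w w_meas x0 x sp k (Some i).
have mX := @event_meas _ T n h E w w_meas x0 x sp k.+1 (Some j).
have lo : (P ([set om | x k om = Some i] `&`
              w k @^-1` [set s | Hnb E i s == [set j]%SET])
           <= P ([set om | x k.+1 om = Some j] `&` [set om | x k om = Some i]))%E.
  apply: le_measure; rewrite ?inE.
  - by apply: measurableI => //; apply: w_meas.
  - exact: measurableI.
  move=> om [/= xi /eqP Hj]; split => //.
  exact: (@forced_step T n h E w x0 x hm k i j om).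
have up : (P ([set om | x k.+1 om = Some j] `&` [set om | x k om = Some i])
           <= P ([set om | x k om = Some i] `&`
              w k @^-1` [set s | j \in Hnb E i s]))%E.
  apply: le_measure; rewrite ?inE.
  - exact: measurableI.
  - by apply: measurableI => //; apply: w_meas.
  move=> om [/= xj xi]; split => //=.
  by case: sp => _ _ h2 _; apply: h2 xi xj.
rewrite indep in lo; rewrite indep in up.
rewrite /cond_prob /ell /emm.
set pA := P [set om | x k om = Some i] in hpos lo up *.
set pX := P ([set om | x k.+1 om = Some j] `&` [set om | x k om = Some i]) in lo up *.
have fA : pA \is a fin_num by apply: fin_num_measure.
have fX : pX \is a fin_num.
  rewrite /pX ge0_fin_numE ?measure_ge0 //.
  by apply: (le_lt_trans (probability_le1 _ _)); [exact: measurableI| exact: ltry].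
rewrite -(fineK fA) -(fineK fX) -EFinM lee_fin in lo.
rewrite -(fineK fA) -(fineK fX) -EFinM lee_fin in up.
rewrite -(fineK fA) lte_fin in hpos.
by rewrite ler_pdivlMr // ler_pdivrMr // mulrC lo /= mulrC.
Qed.
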